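(* Let $b\ge2$, $c_{\mathrm{ov}}\ge0$, $c_i>0$, $c_i^\sharp\ge0$ ($i\in[b]$), and $d_j:=c_{\mathrm{ov}}+\sum_{i\ge j}(c_i+c_i^\sharp)$, so that $d_1>d_2>\cdots>d_b$. Let $L^0_{i,\{s,\dots,b\}}>0$ ($1\le s\le i\le b$) satisfy $L^0_{i,\{1,\dots,b\}}\ge L^0_{i,\{2,\dots,b\}}\ge\cdots\ge L^0_{i,\{i,\dots,b\}}$ for each $i$, and set $\delta_{i,s}:=1/(2L^0_{i,\{s,\dots,b\}})$, so $\delta_{i,1}\le\delta_{i,2}\le\cdots\le\delta_{i,i}$. Consider the linear program $$\min_{q\in\mathbb R^b}\ \sum_{j=1}^bd_jq_j\quad\text{s.t.}\quad q_1,\dots,q_b\ge0,\qquad\sum_{s=1}^i\delta_{i,s}q_s\ge1\ \ (i\in[b]).$$ Let $q$ be an optimal point and fix $i\in[b-1]$. If $\sum_{s=1}^i\delta_{i,s}q_s>1$, then $q_i=0$. Equivalently, $q_i>0$ implies $\sum_{s=1}^i\delta_{i,s}q_s=1$.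
   Context: The constants $L^0_{i,\{s,\dots,b\}}$ are the layer-wise smoothness constants for the randomized progressive training supports $\{s,\dots,b\}$; the monotonicity in $s$ is the choice permitted by nestedness of these sets. This program is an equivalent reformulation of minimizing the expected cost of randomized progressive training over the probabilities $p_s$. *)

(* Defs.v *)
(* Indices [b] = {1,...,b} are represented by 'I_b = {0,...,b-1}. *)
From mathcomp Require Import all_boot all_order all_algebra.
Set Implicit Arguments. Unset Strict Implicit. Unset Printing Implicit Defensive.
Import Order.TTheory GRing.Theory Num.Theory.
Local Open Scope ring_scope.

Section LP.
Variables (R : realFieldType) (b : nat).

Definition dcost (cov : R) (c cs : 'I_b -> R) (j : 'I_b) : R :=
  cov + \sum_(i : 'I_b | (j <= i)%N) (c i + cs i).

(* delta_{i,s} := 1 / (2 L^0_{i,{s..b}}) ; L i s stands for L^0_{i,{s,...,b}} *)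
Definition delta (L : 'I_b -> 'I_b -> R) (i s : 'I_b) : R := 1 / (2 * L i s).

Definition constr_sum (L : 'I_b -> 'I_b -> R) (q : 'I_b -> R) (i : 'I_b) : R :=
  \sum_(s : 'I_b | (s <= i)%N) delta L i s * q s.

Definition lp_feasible (L : 'I_b -> 'I_b -> R) (q : 'I_b -> R) : Prop :=
  (forall j, 0 <= q j) /\ (forall i, 1 <= constr_sum L q i).

Definition lp_objective (cov : R) (c cs : 'I_b -> R) (q : 'I_b -> R) : R :=
  \sum_(j : 'I_b) dcost cov c cs j * q j.

Definition lp_optimal (cov : R) (c cs : 'I_b -> R) (L : 'I_b -> 'I_b -> R)
    (q : 'I_b -> R) : Prop :=
  lp_feasible L q /\
  forall q', lp_feasible L q' -> lp_objective cov c cs q <= lp_objective cov c cs q'.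

End LP.

(* Main.v *)
Require Import Defs.
From mathcomp Require Import all_boot all_order all_algebra.
From mathcomp Require Import zify lra.
Import Order.TTheory GRing.Theory Num.Theory.
Local Open Scope ring_scope.

Lemma sum_ind (R : realFieldType) (b : nat) (F : 'I_b -> R) (P : pred 'I_b) a :
  \sum_(s | P s) F s * (s == a)%:R = if P a then F a else 0.
Proof.
have [Pa|nPa] := boolP (P a).
  rewrite (bigD1 a) //= eqxx mulr1 big1 ?addr0 // => s /andP[_ /negbTE ->].
  by rewrite mulr0.
rewrite big1 // => s Ps; case: eqP => [e|_]; last by rewrite mulr0.
by subst; rewrite Ps in nPa.
Qed.

Lemma sum_pert (R : realFieldType) (b : nat) (F q : 'I_b -> R) (P : pred 'I_b) (e : R) a a' :
  \sum_(s | P s) F s * (q s + e * ((s == a')%:R - (s == a)%:R)) =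
  \sum_(s | P s) F s * q s + e * ((if P a' then F a' else 0) - (if P a then F a else 0)).
Proof.
rewrite -!sum_ind -sumrB mulr_sumr -big_split /=.
by apply: eq_bigr => s _; rewrite !mulrBr !mulrDr; lra.
Qed.

Theorem lemma2 (R : realFieldType) (b : nat) (hb : (2 <= b)%N)
    (cov : R) (c cs : 'I_b -> R) (L : 'I_b -> 'I_b -> R)
    (hcov : 0 <= cov)
    (hc : forall i, 0 < c i)
    (hcs : forall i, 0 <= cs i)
    (hLpos : forall i s : 'I_b, (s <= i)%N -> 0 < L i s)
    (hLmono : forall i s s' : 'I_b, (s <= s')%N -> (s' <= i)%N -> L i s' <= L i s)
    (q : 'I_b -> R) (hq : lp_optimal cov c cs L q)
    (i : 'I_b) (hi : (i.+1 < b)%N) :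
  1 < constr_sum L q i -> q i = 0.
Proof.
move=> hS; case: hq => [[hq0 hqc] hopt].
have := hq0 i; rewrite le_eqVlt => /orP[/eqP -> //|qpos].
exfalso.
pose i1 : 'I_b := Ordinal hi.
have hii1 : i1 != i by rewrite -val_eqE /= (gtn_eqF (ltnSn i)).
set S := constr_sum L q i in hS.
have dpos : 0 < delta L i i by rewrite /delta mul1r invr_gt0 mulr_gt0 ?hLpos.
pose e := Num.min (q i) ((S - 1) / delta L i i).
have epos : 0 < e by rewrite lt_min qpos divr_gt0 // subr_gt0.
have eqi : e <= q i by rewrite ge_min lexx.
have eS : e * delta L i i <= S - 1.
  by rewrite -ler_pdivlMr // ge_min lexx orbT.
pose q' k := q k + e * ((k == i1)%:R - (k == i)%:R).
have feas : lp_feasible L q'.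
  split.
    move=> k; rewrite /q'; case: (eqVneq k i) => [->|ki].
      by rewrite eq_sym (negbTE hii1) ?eqxx /=; lra.
    move: (hq0 k); rewrite ?subr0.
    case: (k == i1) => /=; nra.
  move=> j; rewrite /constr_sum /q' sum_pert -/(constr_sum L q j).
  have := hqc j; case: (ltngtP (val j) (val i)) => hj.
  - by rewrite subr0 mulr0 addr0.
  - have : delta L j i <= delta L j i1.
      have h1 := hLpos j i (ltnW hj).
      have h2 : 0 < L j i1 by apply: hLpos.
      have h3 : L j i1 <= L j i by apply: hLmono => //=.
      rewrite /delta !mul1r lef_pV2 ?posrE ?mulr_gt0 //.
      by rewrite ler_pM2l.
    move=> hd; have h : 0 <= e * (delta L j i1 - delta L j i).
      by rewrite mulr_ge0 ?subr_ge0 // ltW.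
    lra.
  - have hji : j = i by apply: val_inj.
    subst j; rewrite -/S; lra.
have := hopt _ feas.
rewrite /lp_objective /q' sum_pert /= -/(lp_objective cov c cs q).
have : dcost cov c cs i = dcost cov c cs i1 + (c i + cs i).
  rewrite /dcost (bigD1 i) //= (eq_bigl (fun k : 'I_b => (i1 <= k)%N)); first by lra.
  move=> k /=; rewrite -val_eqE /=; apply/idP/idP; lia.
have := hc i; have := hcs i; nra.
Qed.
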